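(* Let $T$ be a spherically homogeneous rooted tree in which every vertex has at least $2$ children, and let $G\le\mathrm{Aut}~T$ be a weakly branch group admitting a finitely generated non-trivial normal subgroup $N$ of infinite index in $G$. Then $G$ does not have property $\mathrm{(LR)}$.
   Context: $\mathrm{Aut}~T$ is the group of automorphisms of $T$ fixing the root; $\mathcal{L}_n$ is the $n$th level; $T_v$ is the subtree of descendants of $v$. For $G\le\mathrm{Aut}~T$, $\mathrm{rist}_G(v)$ is the subgroup of elements of $G$ fixing every vertex outside $T_v$, and $\mathrm{Rist}_G(n)=\prod_{v\in\mathcal{L}_n}\mathrm{rist}_G(v)$. $G$ is weakly branch if it acts transitively on every level of $T$ and $\mathrm{Rist}_G(n)$ is infinite for every $n\ge1$. $H\le G$ is a virtual retract of $G$ if there is a finite-index $K\le G$ containing $H$ and a homomorphism $K\to H$ restricting to the identity on $H$; $G$ has $\mathrm{(LR)}$ if every finitely generated subgroup of $G$ is a virtual retract of $G$. *)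

(* Defs.v *)
From mathcomp Require Import all_boot.
From Stdlib Require List.
Set Implicit Arguments. Unset Strict Implicit. Unset Printing Implicit Defensive.

(* The spherically homogeneous rooted tree with branching sequence m:
   vertices at level n are words x_0 ... x_(n-1) with x_i < m i;
   the root is the empty word, the children of w are rcons w i, i < m (size w). *)
Definition vtx := seq nat.

Definition valid (m : nat -> nat) (w : vtx) : Prop :=
  forall i, i < size w -> nth 0 w i < m i.

Definition adj (v w : vtx) : Prop :=
  (exists i, w = rcons v i) \/ (exists i, v = rcons w i).

(* elements of Aut T: graph automorphisms of T fixing the root; by convention
   they act as the identity on words that are not vertices of T. *)
Definition is_aut (m : nat -> nat) (f : vtx -> vtx) : Prop :=
  [/\ forall w, ~ valid m w -> f w = w,
      forall w, valid m w -> valid m (f w),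
      bijective f,
      f [::] = [::] &
      forall v w, valid m v -> valid m w -> (adj v w <-> adj (f v) (f w))].

Definition aut_mul (g h : vtx -> vtx) : vtx -> vtx := fun x => g (h x).
Definition aut_id : vtx -> vtx := fun x => x.

Definition subset_g (A B : (vtx -> vtx) -> Prop) : Prop := forall g, A g -> B g.

Definition is_subgroup (m : nat -> nat) (G : (vtx -> vtx) -> Prop) : Prop :=
  [/\ subset_g G (is_aut m),
      G aut_id,
      forall g h, G g -> G h -> G (aut_mul g h) &
      forall g, G g -> exists h, [/\ G h, aut_mul h g = aut_id & aut_mul g h = aut_id]].

Definition is_normal (m : nat -> nat) (G N : (vtx -> vtx) -> Prop) : Prop :=
  [/\ is_subgroup m N, subset_g N G &
      forall g h n, G g -> aut_mul h g = aut_id -> aut_mul g h = aut_id ->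
        N n -> N (aut_mul g (aut_mul n h))].

Definition nontrivial (N : (vtx -> vtx) -> Prop) : Prop :=
  exists n, N n /\ n <> aut_id.

Definition fin_gen (m : nat -> nat) (H : (vtx -> vtx) -> Prop) : Prop :=
  exists S : list (vtx -> vtx),
    (forall s, List.In s S -> H s) /\
    forall K, is_subgroup m K -> (forall s, List.In s S -> K s) -> subset_g H K.

Definition finite_index (G K : (vtx -> vtx) -> Prop) : Prop :=
  exists L : list (vtx -> vtx),
    (forall l, List.In l L -> G l) /\
    forall g, G g -> exists l k, [/\ List.In l L, K k & g = aut_mul l k].

Definition infinite_set (S : (vtx -> vtx) -> Prop) : Prop :=
  forall L : list (vtx -> vtx), exists g, S g /\ ~ List.In g L.

Fixpoint level (m : nat -> nat) (n : nat) : seq vtx :=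
  match n with
  | 0 => [:: [::]]
  | n'.+1 => [seq rcons v i | v <- level m n', i <- iota 0 (m n')]
  end.

Definition rist (m : nat -> nat) (G : (vtx -> vtx) -> Prop) (v : vtx) (g : vtx -> vtx) : Prop :=
  G g /\ forall w, valid m w -> ~ prefix v w -> g w = w.

Definition Rist (m : nat -> nat) (G : (vtx -> vtx) -> Prop) (n : nat) (g : vtx -> vtx) : Prop :=
  exists f : vtx -> (vtx -> vtx),
    (forall v, v \in level m n -> rist m G v (f v)) /\
    g = foldr aut_mul aut_id [seq f v | v <- level m n].

Definition weakly_branch (m : nat -> nat) (G : (vtx -> vtx) -> Prop) : Prop :=
  (forall n u v, valid m u -> valid m v -> size u = n -> size v = n ->
     exists g, G g /\ g u = v) /\
  (forall n, 1 <= n -> infinite_set (Rist m G n)).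

Definition virtual_retract (m : nat -> nat) (G H : (vtx -> vtx) -> Prop) : Prop :=
  exists K, [/\ is_subgroup m K, subset_g K G, finite_index G K, subset_g H K &
    exists phi : (vtx -> vtx) -> (vtx -> vtx),
      [/\ forall k, K k -> H (phi k),
          forall a b, K a -> K b -> phi (aut_mul a b) = aut_mul (phi a) (phi b) &
          forall h, H h -> phi h = h]].

Definition has_LR (m : nat -> nat) (G : (vtx -> vtx) -> Prop) : Prop :=
  forall H, is_subgroup m H -> subset_g H G -> fin_gen m H -> virtual_retract m G H.

(* Main.v *)
Require Import Defs.
From mathcomp Require Import all_boot.
From Stdlib Require Import Classical FunctionalExtensionality.
From Stdlib Require List.
Set Implicit Arguments. Unset Strict Implicit. Unset Printing Implicit Defensive.

Lemma valid_cat m v s : valid m (v ++ s) -> valid m v.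
Proof.
move=> H i Hi; have := H i; rewrite size_cat nth_cat Hi; apply.
by apply: leq_trans Hi (leq_addr _ _).
Qed.

Lemma valid_rcons m v i : valid m (rcons v i) -> valid m v.
Proof. by rewrite -cats1; apply: valid_cat. Qed.

Lemma aut_valid m f x : is_aut m f -> f x <> x -> valid m x.
Proof. case=> H _ _ _ _ Hx; apply: NNPP => Hv; exact: Hx (H _ Hv). Qed.

Lemma aut_inj m f : is_aut m f -> injective f.
Proof. by case=> _ _ [g fK _] _ _; apply: can_inj fK. Qed.

Lemma aut_size m f : is_aut m f -> forall w, valid m w -> size (f w) = size w.
Proof.
move=> Ha; have Hinj := aut_inj Ha.
case: Ha => Hinv Hval _ Hroot Hadj.
move=> w; have [n] := ubnP (size w); elim: n w => // n IH w Hn Hw.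
case/lastP: w Hn Hw => [|v i] Hn Hw; first by rewrite Hroot.
have Hv := valid_rcons Hw.
rewrite size_rcons ltnS in Hn.
have IHv : size (f v) = size v by apply: IH => //; apply: leq_trans Hn.
have := (Hadj v (rcons v i) Hv Hw).1 (or_introl (ex_intro _ i erefl)).
case => [[j ->]|[j Hj]]; first by rewrite !size_rcons IHv.
exfalso.
case/lastP: v Hn Hw Hv IHv Hj => [|u k] Hn Hw Hv IHv Hj.
  by move: Hj; rewrite Hroot => /(congr1 size); rewrite size_rcons.
have Hu := valid_rcons Hv.
rewrite size_rcons in Hn IHv.
have IHu : size (f u) = size u by apply: IH => //; apply: leq_trans Hn; apply: leqW.
have := (Hadj u (rcons u k) Hu Hv).1 (or_introl (ex_intro _ k erefl)).
case => [[j' Hj']|[j' Hj']].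
  move: Hj; rewrite Hj' => /(congr1 (fun s => take (size s).-1 s)).
  rewrite -!cats1 !size_cat /= !addn1 /= !take_size_cat // => /Hinj /(congr1 size).
  rewrite !size_cat /= => /eqP; rewrite -addnA -[X in X == _]addn0.
  by rewrite eqn_add2l.
move/(congr1 size): Hj'; rewrite size_rcons IHv IHu => /eqP.
by rewrite -[X in X == _]addn0 -addn2 eqn_add2l.
Qed.

Lemma aut_rcons m f v i : is_aut m f -> valid m (rcons v i) ->
  exists j, f (rcons v i) = rcons (f v) j.
Proof.
move=> Ha Hw; have Hv := valid_rcons Hw.
have Hs := aut_size Ha.
case: Ha => _ _ _ _ Hadj.
have := (Hadj v (rcons v i) Hv Hw).1 (or_introl (ex_intro _ i erefl)).
case => [//|[j Hj]]; exfalso.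
move/(congr1 size): Hj; rewrite size_rcons Hs // Hs // size_rcons => /eqP.
by rewrite -[X in X == _]addn0 -addn2 eqn_add2l.
Qed.

Lemma aut_prefix m f (v z : vtx) : is_aut m f -> valid m z -> prefix v z -> prefix (f v) (f z).
Proof.
move=> Ha Hz /prefixP [s Es]; subst z.
elim/last_ind: s Hz => [|s i IH]; first by rewrite cats0 prefix_refl.
rewrite -rcons_cat => Hz.
have [j ->] := aut_rcons Ha Hz.
apply: prefix_trans (IH (valid_rcons Hz)) (prefix_rcons _ _).
Qed.

Lemma prefix_same (a b x : vtx) : prefix a x -> prefix b x -> size a = size b -> a = b.
Proof.
move=> /prefixP [s ->] /prefixP [t Et] Hs.
have := congr1 (take (size a)) Et.
by rewrite take_size_cat // Hs take_size_cat.
Qed.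

Definition supp_in (g : vtx -> vtx) (P : vtx -> Prop) := forall x, g x <> x -> P x.
Definition Tsub (w : vtx) : vtx -> Prop := fun x => prefix w x.

Lemma moved_moved (g : vtx -> vtx) x : injective g -> g x <> x -> g (g x) <> g x.
Proof. by move=> Hi Hx /Hi. Qed.

Lemma disj_commute g h A B : injective g -> injective h -> supp_in g A -> supp_in h B ->
  (forall x, A x -> B x -> False) -> aut_mul g h = aut_mul h g.
Proof.
move=> Ig Ih Sg Sh D; apply: functional_extensionality => x; rewrite /aut_mul.
have [Hg|Hg] := classic (g x = x); have [Hh|Hh] := classic (h x = x).
- by rewrite Hg Hh Hg.
- have Bx := Sh _ Hh.
  have Bhx := Sh _ (moved_moved Ih Hh).
  rewrite Hg; apply: NNPP => Hn; exact: D (Sg _ Hn) Bhx.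
- have Ax := Sg _ Hg.
  have Agx := Sg _ (moved_moved Ig Hg).
  rewrite Hh; apply: NNPP => Hn; exact: D Agx (Sh _ (fun E => Hn (esym E))).
- by case: (D x (Sg _ Hg) (Sh _ Hh)).
Qed.

Lemma cancel_supp X1 Y1 X2 Y2 A B : injective Y1 -> injective Y2 ->
  supp_in X1 A -> supp_in X2 A -> supp_in Y1 B -> supp_in Y2 B ->
  (forall x, A x -> B x -> False) ->
  aut_mul X1 Y1 = aut_mul X2 Y2 -> Y1 = Y2.
Proof.
move=> I1 I2 SX1 SX2 SY1 SY2 D E; apply: functional_extensionality => x.
have [Bx|Bx] := classic (B x); last first.
  have ->: Y1 x = x by apply: NNPP => /SY1.
  by have ->: Y2 x = x by apply: NNPP => /SY2.
have BY (Y : vtx -> vtx) : injective Y -> supp_in Y B -> B (Y x).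
  move=> I S; have [->|H] := classic (Y x = x) => //; exact: S _ (moved_moved I H).
have FX (X : vtx -> vtx) y : supp_in X A -> B y -> X y = y.
  by move=> S By; apply: NNPP => /S Ay; exact: D y Ay By.
have := congr1 (fun f => f x) E; rewrite /aut_mul.
by rewrite (FX X1) ?(FX X2) //; [apply: BY | apply: BY].
Qed.

Lemma supp_conj m t t' g w : is_aut m t -> is_aut m g -> (forall x, t (t' x) = x) ->
  valid m w -> supp_in g (Tsub w) -> supp_in (aut_mul t (aut_mul g t')) (Tsub (t w)).
Proof.
move=> Ht Hg Htt' Hw Sg x; rewrite /aut_mul => Hx.
have Hm : g (t' x) <> t' x by move=> E; apply: Hx; rewrite E Htt'.
have := aut_prefix Ht (aut_valid Hg Hm) (Sg _ Hm).
by rewrite /Tsub Htt'.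
Qed.

Lemma supp_inv (g g' : vtx -> vtx) A : injective g -> (forall x, g (g' x) = x) ->
  supp_in g A -> supp_in g' A.
Proof.
move=> Ig E S x Hx.
have H1 : g (g' x) <> g' x by rewrite E => /esym.
have := moved_moved Ig H1; rewrite E; exact: S.
Qed.

Lemma Tsub_disj m (a b : vtx) : valid m a -> a <> b -> size a = size b ->
  forall x, Tsub a x -> Tsub b x -> False.
Proof. by move=> _ Hab Hs x Ha Hb; apply: Hab; apply: prefix_same Ha Hb Hs. Qed.

Lemma moves_desc m n u z : is_aut m n -> valid m u -> n u <> u -> valid m z ->
  prefix u z -> n z <> z.
Proof.
move=> Hn Hu Hnu Hz Hp E.
have := aut_prefix Hn Hz Hp; rewrite E => Hp'.
by apply: Hnu; apply: prefix_same Hp' Hp (aut_size Hn Hu).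
Qed.

Lemma pt (f g : vtx -> vtx) : f = g -> forall x, f x = g x.
Proof. by move=> ->. Qed.

Lemma inv_pt (h g : vtx -> vtx) : aut_mul h g = aut_id -> forall x, h (g x) = x.
Proof. by move=> E x; exact: (pt E x). Qed.

Lemma ne_id_moves (g : vtx -> vtx) : g <> aut_id -> exists x, g x <> x.
Proof.
move=> H; apply: NNPP => H'; apply: H; apply: functional_extensionality => x.
by apply: NNPP => Hx; apply: H'; exists x.
Qed.

Lemma supp_mul X Y A B : supp_in X A -> supp_in Y B ->
  supp_in (aut_mul X Y) (fun x => A x \/ B x).
Proof.
move=> SX SY x; rewrite /aut_mul => H.
have [E|E] := classic (Y x = x); last by right; exact: SY.
by left; apply: SX; move: H; rewrite E.
Qed.

Lemma supp_weak X A B : supp_in X A -> (forall x, A x -> B x) -> supp_in X B.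
Proof. by move=> S I x /S /I. Qed.

Lemma valid_ext m (Hm : forall n, 2 <= m n) u k : valid m u -> valid m (u ++ nseq k 0).
Proof.
move=> Hu i; rewrite size_cat size_nseq nth_cat => Hi.
case: ifP => [/Hu //|_]; rewrite nth_nseq; case: ifP => _; exact: ltnW (Hm i).
Qed.

Lemma level_valid m n v : v \in level m n -> valid m v /\ size v = n.
Proof.
elim: n v => [|n IH] v /=.
  by rewrite inE => /eqP ->; split => // i.
case/allpairsP => [[v' i] /= [Hv' Hi ->]].
have [Hv Hs] := IH _ Hv'.
split; last by rewrite size_rcons Hs.
move=> k; rewrite size_rcons ltnS nth_rcons leq_eqVlt => /orP [/eqP Ek|Hk].
  by rewrite Ek ltnn eqxx; move: Hi; rewrite mem_iota add0n Hs => /andP [].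
by rewrite Hk; apply: Hv.
Qed.

Lemma foldr_id (f : vtx -> (vtx -> vtx)) (s : seq vtx) :
  (forall v, v \in s -> f v = aut_id) -> foldr aut_mul aut_id [seq f v | v <- s] = aut_id.
Proof.
elim: s => [//|a s IH] H /=.
by rewrite H ?inE ?eqxx // IH // => v Hv; apply: H; rewrite inE Hv orbT.
Qed.

Lemma nontriv_rist m G (HG : is_subgroup m G) (Hwb : weakly_branch m G) y :
  valid m y -> 1 <= size y -> exists g, [/\ G g, g <> aut_id & supp_in g (Tsub y)].
Proof.
move=> Hy Hs.
case: HG => Hsub Hid Hmul Hinv.
have [r [[f [Hf Er]] Hr]] := Hwb.2 (size y) Hs [:: aut_id].
have [v [Hv Hfv]] : exists v, v \in level m (size y) /\ f v <> aut_id.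
  apply: NNPP => H; apply: Hr; rewrite Er foldr_id /=; first by left.
  by move=> v Hv; apply: NNPP => Hne; apply: H; exists v.
have [Gf Sf] := Hf v Hv.
have Af := Hsub _ Gf.
have Sfv : supp_in (f v) (Tsub v).
  move=> x Hx; apply: NNPP => Hp; exact: Hx (Sf _ (aut_valid Af Hx) Hp).
have [Vv Szv] := level_valid Hv.
have [t [Gt Etv]] := Hwb.1 (size y) v y Vv Hy Szv erefl.
have [t' [Gt' Et't Ett']] := Hinv t Gt.
have At := Hsub _ Gt.
exists (aut_mul t (aut_mul (f v) t')); split.
- exact: Hmul _ _ Gt (Hmul _ _ Gf Gt').
- move=> E; apply: Hfv; apply: functional_extensionality => z.
  have := pt E (t z); rewrite /aut_mul /aut_id (inv_pt Et't) => E2.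
  by rewrite -[RHS](inv_pt Et't) -E2 (inv_pt Et't).
- by rewrite -Etv; apply: supp_conj At Af (inv_pt Ett') Vv Sfv.
Qed.

Lemma not_abelian m G (HG : is_subgroup m G) (Hwb : weakly_branch m G) w :
  valid m w -> 1 <= size w ->
  ~ (forall g h, G g -> G h -> supp_in g (Tsub w) -> supp_in h (Tsub w) ->
       aut_mul g h = aut_mul h g).
Proof.
move=> Hw Hs Hab.
have [g [Gg gn Sg]] := nontriv_rist HG Hwb Hw Hs.
have HG' := HG; case: HG' => Hsub Hid Hmul Hinv.
have Ag := Hsub _ Gg.
have [x Hx] := ne_id_moves gn.
have Vx := aut_valid Ag Hx.
have Px : Tsub w x := Sg _ Hx.
have Sx : 1 <= size x by apply: leq_trans Hs (size_prefix Px).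
have [h [Gh hn Sh]] := nontriv_rist HG Hwb Vx Sx.
have Ah := Hsub _ Gh.
have Shw : supp_in h (Tsub w).
  by move=> z /Sh; apply: prefix_trans Px.
have [g' [Gg' Eg'g Egg']] := Hinv g Gg.
have Sk := supp_conj Ag Ah (inv_pt Egg') Vx Sh.
have Ek : aut_mul g (aut_mul h g') = h.
  apply: functional_extensionality => z; rewrite /aut_mul.
  by have := pt (Hab g h Gg Gh Sg Shw) (g' z); rewrite /aut_mul (inv_pt Egg').
rewrite Ek in Sk.
apply: hn; apply: functional_extensionality => z; apply: NNPP => Hz.
apply: (Tsub_disj Vx (fun E => Hx (esym E)) (esym (aut_size Ag Vx))) (Sh _ Hz) (Sk _ Hz).
Qed.

Lemma abelian_at m G (HG : is_subgroup m G) N (HN : is_normal m G N) nn cc w :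
  N nn -> G cc -> (forall n, N n -> aut_mul cc n = aut_mul n cc) ->
  valid m w -> nn w <> w -> cc w <> w ->
  forall g h, G g -> G h -> supp_in g (Tsub w) -> supp_in h (Tsub w) ->
    aut_mul g h = aut_mul h g.
Proof.
move=> Nnn Gcc Hcc Vw Hnw Hcw g h Gg Gh Sg Sh.
case: HG => Hsub Hid Hmul Hinv.
case: HN => [[_ _ HNmul HNinv] HNG HNn].
have Ann := Hsub _ (HNG _ Nnn).
have Acc := Hsub _ Gcc.
have Ag := Hsub _ Gg.
have Ah := Hsub _ Gh.
have [g' [Gg' Eg'g Egg']] := Hinv g Gg.
have [h' [Gh' Eh'h Ehh']] := Hinv h Gh.
have [cc' [Gcc' Ecc'c Ecc']] := Hinv cc Gcc.
have [nn' [Nnn' Enn'n Enn']] := HNinv nn Nnn.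
pose p := aut_mul nn (aut_mul g nn').
pose q := aut_mul cc (aut_mul h cc').
pose a := aut_mul p g'.
pose b := aut_mul q h'.
have Na : N a.
  exact: HNmul _ _ Nnn (HNn g g' nn' Gg Eg'g Egg' Nnn').
have Ccc z y : N z -> cc (z y) = z (cc y).
  by move=> Nz; exact: pt (Hcc z Nz) y.
have Ccc' z y : N z -> cc' (z y) = z (cc' y).
  move=> Nz; rewrite -{1}[y](inv_pt Ecc') -Ccc //.
  by rewrite (inv_pt Ecc'c).
have Cab y : a (b y) = b (a y).
  have Na2 : N (aut_mul h' (aut_mul a h)) by exact: HNn h' h a Gh' Ehh' Eh'h Na.
  rewrite /b /q /aut_mul.
  have E1 : h' (a y) = aut_mul h' (aut_mul a h) (h' y).
    by rewrite /aut_mul (inv_pt Ehh').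
  rewrite E1 (Ccc' _ _ Na2) /aut_mul (inv_pt Ehh') (Ccc _ _ Na) //.
have Sp : supp_in p (Tsub (nn w)) := supp_conj Ann Ag (inv_pt Enn') Vw Sg.
have Sq : supp_in q (Tsub (cc w)) := supp_conj Acc Ah (inv_pt Ecc') Vw Sh.
have Sg' : supp_in g' (Tsub w) := supp_inv (aut_inj Ag) (inv_pt Egg') Sg.
have Sh' : supp_in h' (Tsub w) := supp_inv (aut_inj Ah) (inv_pt Ehh') Sh.
have Ig' : injective g' by apply: (can_inj (inv_pt Egg')).
have Ih' : injective h' by apply: (can_inj (inv_pt Ehh')).
have Ip : injective p by apply: inj_comp (aut_inj Ann) (inj_comp (aut_inj Ag) (can_inj (inv_pt Enn'))).
have Iq : injective q by apply: inj_comp (aut_inj Acc) (inj_comp (aut_inj Ah) (can_inj (inv_pt Ecc'))).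
have Dn : forall x, Tsub w x -> Tsub (nn w) x -> False.
  exact: Tsub_disj Vw (fun E => Hnw (esym E)) (esym (aut_size Ann Vw)).
have Dc : forall x, Tsub w x -> Tsub (cc w) x -> False.
  exact: Tsub_disj Vw (fun E => Hcw (esym E)) (esym (aut_size Acc Vw)).
have Cg'q := pt (disj_commute Ig' Iq Sg' Sq Dc).
have Ch'p := pt (disj_commute Ih' Ip Sh' Sp Dn).
have E : aut_mul (aut_mul p q) (aut_mul g' h') = aut_mul (aut_mul q p) (aut_mul h' g').
  apply: functional_extensionality => y.
  have := Cab y; rewrite /a /b /aut_mul.
  move: (Cg'q (h' y)) (Ch'p (g' y)); rewrite /aut_mul => -> ->.
  done.
have D : forall x, (Tsub (nn w) x \/ Tsub (cc w) x) -> Tsub w x -> False.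
  by move=> x [H1|H1] H2; [exact: Dn H2 H1 | exact: Dc H2 H1].
have Sw : forall x, Tsub w x \/ Tsub w x -> Tsub w x by move=> x [].
have Spq := supp_mul Sp Sq.
have Sqp : supp_in (aut_mul q p) (fun x => Tsub (nn w) x \/ Tsub (cc w) x).
  apply: supp_weak (supp_mul Sq Sp) _ => x [] ?; by [right | left].
have E2 := cancel_supp (inj_comp Ig' Ih') (inj_comp Ih' Ig') Spq Sqp
  (supp_weak (supp_mul Sg' Sh') Sw) (supp_weak (supp_mul Sh' Sg') Sw) D E.
apply: functional_extensionality => z; rewrite /aut_mul.
have := pt E2 (h (g z)); rewrite /= (inv_pt Eh'h) (inv_pt Eg'g) => E3.
by rewrite {1}E3 (inv_pt Ehh') (inv_pt Egg').
Qed.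

Lemma key m (Hm : forall n, 2 <= m n) G (HG : is_subgroup m G) (Hwb : weakly_branch m G)
  N (HN : is_normal m G N) (HNnt : nontrivial N) c :
  G c -> c <> aut_id -> (forall n, N n -> aut_mul c n = aut_mul n c) -> False.
Proof.
move=> Gc cn Hc.
have HG' := HG; case: HG' => Hsub Hid Hmul Hinv.
have HN' := HN; case: HN' => _ HNG HNn.
have [n0 [Nn0 n0n]] := HNnt.
have An0 := Hsub _ (HNG _ Nn0).
have Ac := Hsub _ Gc.
have [u0 Hu0] := ne_id_moves n0n.
have [v0 Hv0] := ne_id_moves cn.
have Vu0 := aut_valid An0 Hu0.
have Vv0 := aut_valid Ac Hv0.
pose M := (size u0 + size v0).+1.
pose u1 := u0 ++ nseq (M - size u0) 0.
pose v1 := v0 ++ nseq (M - size v0) 0.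
have Vu1 : valid m u1 by apply: valid_ext.
have Vv1 : valid m v1 by apply: valid_ext.
have Su1 : size u1 = M.
  by rewrite size_cat size_nseq subnKC // /M ltnW // ltnS leq_addr.
have Sv1 : size v1 = M.
  by rewrite size_cat size_nseq subnKC // /M ltnW // ltnS leq_addl.
have Mu1 : n0 u1 <> u1 := moves_desc An0 Vu0 Hu0 Vu1 (prefix_prefix _ _).
have Mv1 : c v1 <> v1 := moves_desc Ac Vv0 Hv0 Vv1 (prefix_prefix _ _).
have [t [Gt Etv]] := Hwb.1 M v1 u1 Vv1 Vu1 Sv1 Su1.
have [t' [Gt' Et't Ett']] := Hinv t Gt.
have At := Hsub _ Gt.
pose c' := aut_mul t (aut_mul c t').
have Gc' : G c' := Hmul _ _ Gt (Hmul _ _ Gc Gt').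
have Mc' : c' u1 <> u1.
  rewrite /c' /aut_mul -Etv (inv_pt Et't) => E.
  by apply: Mv1; apply: (aut_inj At).
have Hc' : forall n, N n -> aut_mul c' n = aut_mul n c'.
  move=> n Nn; apply: functional_extensionality => z.
  have N2 : N (aut_mul t' (aut_mul n t)) := HNn t' t n Gt' Ett' Et't Nn.
  have := pt (Hc _ N2) (t' z); rewrite /c' /aut_mul (inv_pt Ett') => ->.
  by rewrite (inv_pt Ett').
apply: (not_abelian HG Hwb Vu1 _) (abelian_at HG HN Nn0 Gc' Hc' Vu1 Mu1 Mc').
by rewrite Su1.
Qed.

Theorem corollary3p4 (m : nat -> nat) (Hm : forall n, 2 <= m n)
  (G : (vtx -> vtx) -> Prop) (HG : is_subgroup m G) (Hwb : weakly_branch m G)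
  (N : (vtx -> vtx) -> Prop) (HN : is_normal m G N) (HNfg : fin_gen m N)
  (HNnt : nontrivial N) (HNinf : ~ finite_index G N) :
  ~ has_LR m G.
Proof.
move=> HLR.
have HN' := HN; case: HN' => HNs HNG HNn.
have HNs' := HNs; case: HNs' => _ HNid HNmul HNinv.
have [K [HK HKG HKfi HNK [phi [Hphi1 Hphi2 Hphi3]]]] := HLR N HNs HNG HNfg.
have HK' := HK; case: HK' => _ HKid HKmul HKinv.
have [k [Kk Nk]] : exists k, K k /\ ~ N k.
  apply: NNPP => H; apply: HNinf.
  have [L [HL1 HL2]] := HKfi.
  exists L; split => // g Gg.
  have [l [k [Hl Kk ->]]] := HL2 g Gg.
  exists l, k; split => //; apply: NNPP => Nk; apply: H; by exists k.
have Npk := Hphi1 k Kk.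
have [p' [Np' Ep'p Epp']] := HNinv _ Npk.
have [k' [Kk' Ek'k Ekk']] := HKinv k Kk.
pose r := aut_mul p' k.
pose r' := aut_mul k' (phi k).
have Kr : K r := HKmul _ _ (HNK _ Np') Kk.
have Kr' : K r' := HKmul _ _ Kk' (HNK _ Npk).
have Gr : G r := HKG _ Kr.
have Err' : aut_mul r r' = aut_id.
  apply: functional_extensionality => z; rewrite /r /r' /aut_mul.
  by rewrite (inv_pt Ekk') (inv_pt Ep'p).
have Er'r : aut_mul r' r = aut_id.
  apply: functional_extensionality => z; rewrite /r /r' /aut_mul.
  by rewrite (inv_pt Epp') (inv_pt Ek'k).
have phir : phi r = aut_id by rewrite /r (Hphi2 _ _ (HNK _ Np') Kk) (Hphi3 _ Np').
have phir' : phi r' = aut_id.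
  by rewrite /r' (Hphi2 _ _ Kk' (HNK _ Npk)) (Hphi3 _ Npk) -(Hphi2 _ _ Kk' Kk) Ek'k (Hphi3 _ HNid).
apply: (key Hm HG Hwb HN HNnt Gr).
- move=> E; apply: Nk.
  have -> : k = phi k.
    apply: functional_extensionality => z.
    have := pt E z; rewrite /r /aut_mul /aut_id => Ez.
    by rewrite -{2}Ez (inv_pt Epp').
  exact: Npk.
- move=> n Nn.
  have [n' [Nn' En'n Enn']] := HNinv n Nn.
  pose x := aut_mul (aut_mul r (aut_mul n r')) n'.
  have Nx : N x := HNmul _ _ (HNn r r' n Gr Er'r Err' Nn) Nn'.
  have Kn := HNK _ Nn.
  have Kn' := HNK _ Nn'.
  have K1 : K (aut_mul n r') := HKmul _ _ Kn Kr'.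
  have K2 : K (aut_mul r (aut_mul n r')) := HKmul _ _ Kr K1.
  have Ex : x = aut_id.
    rewrite -(Hphi3 _ Nx) /x (Hphi2 _ _ K2 Kn') (Hphi2 _ _ Kr K1) (Hphi2 _ _ Kn Kr').
    rewrite phir phir' (Hphi3 _ Nn) (Hphi3 _ Nn').
    exact: Enn'.
  apply: functional_extensionality => y; rewrite /aut_mul.
  have := pt Ex (n (r y)); rewrite /x /aut_mul (inv_pt En'n) (inv_pt Er'r) => ->.
  done.
Qed.
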